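(* Let $\Upsilon$ be a tree and let $\|\cdot\|$ be an equivalent strictly convex norm on $C_0(\Upsilon)$. Then the associated function $\mu(t)=\inf\{\|\mathbf{1}_{(0,t]}+f'\|: f'\in C_0(\Upsilon),\ \operatorname{supp}f'\subseteq(t,\infty)\}$ is constant on no ever-branching subset of $\Upsilon$.
   Context: A tree is a partially ordered set $(\Upsilon,\preceq)$ such that for each $t$ the set $(0,t]=\{s:s\preceq t\}$ is well-ordered; write $(0,t)=\{s:s\prec t\}$, $[t,\infty)=\{u:t\preceq u\}$, $(t,\infty)=\{u:t\prec u\}$, and let $r(t)$ be the order type of $(0,t)$. Trees are assumed Hausdorff: if $r(t)$ is a limit ordinal and $(0,t)=(0,t')$ then $t=t'$. $\Upsilon$ carries the coarsest topology in which every $(0,t]$ is open and closed, and $C_0(\Upsilon)$ is the space of continuous $f:\Upsilon\to\mathbb{R}$ with $\{|f|\ge\epsilon\}$ compact for every $\epsilon>0$, with the supremum norm; $\operatorname{supp}f=\{s:f(s)\ne0\}$. A subset $\Gamma\subseteq\Upsilon$ is ever-branching if it is non-empty and for every $t\in\Gamma$ the set $\Gamma\cap[t,\infty)$ is not totally ordered. A norm is strictly convex if $\|x\|=\|y\|=\tfrac12\|x+y\|$ implies $x=y$. *)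

(* Defs.v *)
From Stdlib Require Import Reals List Classical ClassicalEpsilon.
From Coquelicot Require Import Coquelicot.
Open Scope R_scope.

Section Trees.
Context {T : Type} (le : T -> T -> Prop).

Definition lt (s t : T) : Prop := le s t /\ s <> t.

Definition initial_well_ordered (t : T) : Prop :=
  (forall a b, le a t -> le b t -> le a b \/ le b a) /\
  (forall P : T -> Prop, (exists a, P a /\ le a t) ->
     exists m, P m /\ le m t /\ forall a, P a -> le a t -> le m a).

(* r(t), the order type of (0,t), is a (nonzero) limit ordinal:
   (0,t) is nonempty and has no greatest element *)
Definition limit_height (t : T) : Prop :=
  (exists s, lt s t) /\ (forall s, lt s t -> exists s', lt s s' /\ lt s' t).

Definition is_tree : Prop :=
  (forall t, le t t) /\
  (forall s t, le s t -> le t s -> s = t) /\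
  (forall s t u, le s t -> le t u -> le s u) /\
  (forall t, initial_well_ordered t) /\
  (* Hausdorff *)
  (forall t t', limit_height t -> (forall s, lt s t <-> lt s t') -> t = t').

(* Finite intersections of the subbasic sets (0,t] and their complements. *)
Definition basic (A B : list T) (x : T) : Prop :=
  (forall t, In t A -> le x t) /\ (forall s, In s B -> ~ le x s).

Definition is_open (U : T -> Prop) : Prop :=
  forall x, U x -> exists A B, basic A B x /\ forall y, basic A B y -> U y.

Definition is_compact (K : T -> Prop) : Prop :=
  forall (I : Type) (U : I -> T -> Prop),
    (forall i, is_open (U i)) ->
    (forall x, K x -> exists i, U i x) ->
    exists l : list I, forall x, K x -> exists i, In i l /\ U i x.

Definition continuous_tree (f : T -> R) : Prop :=
  forall x eps, 0 < eps -> exists A B, basic A B x /\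
    forall y, basic A B y -> Rabs (f y - f x) < eps.

Definition C0 (f : T -> R) : Prop :=
  continuous_tree f /\
  forall eps, 0 < eps -> is_compact (fun x => eps <= Rabs (f x)).

Definition sup_norm (f : T -> R) : R :=
  real (Lub_Rbar (fun r => exists x, r = Rabs (f x))).

Definition equivalent_norm (N : (T -> R) -> R) : Prop :=
  (forall f g, C0 f -> C0 g -> N (fun x => f x + g x) <= N f + N g) /\
  (forall c f, C0 f -> N (fun x => c * f x) = Rabs c * N f) /\
  (forall f, C0 f -> 0 <= N f) /\
  (forall f, C0 f -> N f = 0 -> forall x, f x = 0) /\
  (exists a b, 0 < a /\ 0 < b /\
     forall f, C0 f -> a * sup_norm f <= N f /\ N f <= b * sup_norm f).

Definition strictly_convex (N : (T -> R) -> R) : Prop :=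
  forall f g, C0 f -> C0 g ->
    N f = N g -> N g = / 2 * N (fun x => f x + g x) -> forall x, f x = g x.

Definition indicator_le (t : T) : T -> R :=
  fun x => if excluded_middle_informative (le x t) then 1 else 0.

Definition mu (N : (T -> R) -> R) (t : T) : R :=
  real (Glb_Rbar (fun r => exists f', C0 f' /\
          (forall s, f' s <> 0 -> lt t s) /\
          r = N (fun x => indicator_le t x + f' x))).

Definition ever_branching (G : T -> Prop) : Prop :=
  (exists t, G t) /\
  forall t, G t -> exists u v, G u /\ G v /\ le t u /\ le t v /\
    ~ le u v /\ ~ le v u.

Definition constant_on (g : T -> R) (G : T -> Prop) : Prop :=
  exists c, forall t, G t -> g t = c.

End Trees.

(* Main.v *)
Require Import Defs.
From Stdlib Require Import Reals List Classical ClassicalEpsilon FunctionalExtensionality Lra Lia ZArith.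
From Coquelicot Require Import Coquelicot.
Open Scope R_scope.

Lemma tree_refl T (le:T->T->Prop) : is_tree le -> forall t, le t t.
Proof. intros H; apply H. Qed.
Lemma tree_antisym T (le:T->T->Prop) : is_tree le -> forall s t, le s t -> le t s -> s = t.
Proof. intros H; apply H. Qed.
Lemma tree_trans T (le:T->T->Prop) : is_tree le -> forall s t u, le s t -> le t u -> le s u.
Proof. intros H; apply H. Qed.
Lemma tree_comp T (le:T->T->Prop) : is_tree le -> forall a b t, le a t -> le b t -> le a b \/ le b a.
Proof. intros H a b t ha hb. destruct H as (_&_&_&H&_). destruct (H t) as [Hc _]. auto. Qed.
Lemma tree_wo T (le:T->T->Prop) : is_tree le -> forall t (P:T->Prop), (exists a, P a /\ le a t) ->
  exists m, P m /\ le m t /\ forall a, P a -> le a t -> le m a.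
Proof. intros H t. destruct H as (_&_&_&H&_). destruct (H t) as [_ Hc]. auto. Qed.
Lemma tree_haus T (le:T->T->Prop) : is_tree le -> forall t t', limit_height le t -> (forall s, lt le s t <-> lt le s t') -> t = t'.
Proof. intros H; apply H. Qed.

Lemma lt_trans_le T (le:T->T->Prop) : is_tree le -> forall p q y, le p q -> lt le q y -> lt le p y.
Proof.
  intros H p q y hpq [hqy hne]. split. eapply tree_trans; eauto.
  intros ->. apply hne. eapply tree_antisym; eauto.
Qed.

Lemma cont_ind T (le:T->T->Prop) : is_tree le -> forall t, continuous_tree le (indicator_le le t).
Proof.
  intros H t x eps he. unfold indicator_le.
  destruct (excluded_middle_informative (le x t)) as [hx|hx].
  - exists (t::nil), nil. split. split; [intros s [<-|[]]; auto | intros s []].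
    intros y [hy _]. destruct (excluded_middle_informative (le y t)) as [h|h].
    + rewrite Rminus_diag, Rabs_R0; auto.
    + exfalso; apply h, hy; left; auto.
  - exists (x::nil), (t::nil). split. split.
    + intros s [<-|[]]. apply tree_refl; auto.
    + intros s [<-|[]]; auto.
    + intros y [hy1 hy2]. destruct (excluded_middle_informative (le y t)) as [h|h].
      * exfalso; apply (hy2 t); [left|]; auto.
      * rewrite Rminus_diag, Rabs_R0; auto.
Qed.

Lemma basic_app T (le:T->T->Prop) A1 B1 A2 B2 x :
  basic le (A1++A2) (B1++B2) x <-> basic le A1 B1 x /\ basic le A2 B2 x.
Proof.
  unfold basic; split.
  - intros [h1 h2]; repeat split; intros; [apply h1|apply h2|apply h1|apply h2]; auto using in_or_app.
  - intros [[a b] [c d]]; split; intros s hs; apply in_app_or in hs; destruct hs; auto.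
Qed.

Lemma cont_lin T (le:T->T->Prop) f g al be : continuous_tree le f -> continuous_tree le g ->
  continuous_tree le (fun y => al * f y + be * g y).
Proof.
  intros hf hg x eps he.
  set (d := eps / (Rabs al + Rabs be + 1)).
  assert (hd : 0 < d). { unfold d. apply Rdiv_lt_0_compat; auto. pose proof (Rabs_pos al); pose proof (Rabs_pos be); lra. }
  destruct (hf x d hd) as (A1&B1&hb1&h1). destruct (hg x d hd) as (A2&B2&hb2&h2).
  exists (A1++A2), (B1++B2). split. apply basic_app; auto.
  intros y hy. apply basic_app in hy as [hy1 hy2]. specialize (h1 y hy1). specialize (h2 y hy2).
  replace (al * f y + be * g y - (al * f x + be * g x)) with (al * (f y - f x) + be * (g y - g x)) by ring.
  eapply Rle_lt_trans. apply Rabs_triang. rewrite !Rabs_mult.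
  assert (Rabs al * Rabs (f y - f x) <= Rabs al * d) by (apply Rmult_le_compat_l; [apply Rabs_pos|lra]).
  assert (Rabs be * Rabs (g y - g x) <= Rabs be * d) by (apply Rmult_le_compat_l; [apply Rabs_pos|lra]).
  assert (d * (Rabs al + Rabs be + 1) = eps) by (unfold d; field; pose proof (Rabs_pos al); pose proof (Rabs_pos be); lra).
  nra.
Qed.

Lemma open_lt T (le:T->T->Prop) f K : continuous_tree le f -> is_open le (fun y => Rabs (f y) < K).
Proof.
  intros hf x hx. destruct (hf x (K - Rabs (f x))) as (A&B&hb&h). lra.
  exists A, B; split; auto. intros y hy. specialize (h y hy).
  pose proof (Rabs_triang_inv (f y) (f x)). lra.
Qed.

Fixpoint somes {I} (l : list (option I)) : list I :=
  match l with nil => nil | Some i :: r => i :: somes r | None :: r => somes r end.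
Lemma in_somes {I} (l : list (option I)) i : In (Some i) l -> In i (somes l).
Proof. induction l as [|[j|] r IH]; simpl; intros h; auto. destruct h as [h|h]. inversion h; auto. auto.
  destruct h as [h|h]. discriminate. auto. Qed.

Lemma closed_sub_compact T (le:T->T->Prop) (K1 K : T -> Prop) : is_compact le K1 -> (forall x, K x -> K1 x) ->
  is_open le (fun x => ~ K x) -> is_compact le K.
Proof.
  intros hc hs ho I U HU Hcov.
  destruct (hc (option I) (fun o => match o with Some i => U i | None => fun x => ~ K x end)) as [l hl].
  - intros [i|]; auto.
  - intros x _. destruct (classic (K x)) as [h|h]. destruct (Hcov x h) as [i hi]. exists (Some i); auto. exists None; auto.
  - exists (somes l). intros x hx. destruct (hl x (hs x hx)) as [[i|] [h1 h2]].
    exists i; split; auto. apply in_somes; auto. contradiction.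
Qed.

Lemma compact_union T (le:T->T->Prop) (K1 K2 : T -> Prop) : is_compact le K1 -> is_compact le K2 ->
  is_compact le (fun x => K1 x \/ K2 x).
Proof.
  intros h1 h2 I U HU Hcov.
  destruct (h1 I U HU) as [l1 hl1]. intros x hx; apply Hcov; auto.
  destruct (h2 I U HU) as [l2 hl2]. intros x hx; apply Hcov; auto.
  exists (l1++l2). intros x [hx|hx].
  destruct (hl1 x hx) as [i [hi hu]]; exists i; split; auto using in_or_app.
  destruct (hl2 x hx) as [i [hi hu]]; exists i; split; auto using in_or_app.
Qed.

Lemma compact_empty T (le:T->T->Prop) (K : T -> Prop) : (forall x, ~ K x) -> is_compact le K.
Proof. intros h I U _ _. exists nil. intros x hx. destruct (h x hx). Qed.
Lemma compact_down T (le:T->T->Prop) (H:is_tree le) t : is_compact le (fun x => le x t).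
Proof.
  intros I U HU Hcov.
  apply NNPP; intro Hno.
  set (P := fun s => ~ exists l, forall x, le x s -> exists i, In i l /\ U i x).
  destruct (tree_wo _ _ H t P) as (m & Pm & hmt & hmin).
  { exists t; split; [|apply (tree_refl _ _ H)]. exact Hno. }
  destruct (Hcov m hmt) as [i0 hi0]. destruct (HU i0 m hi0) as (A&B&[hA hB]&hsub).
  assert (claim: (exists s, lt le s m /\ forall y, le y m -> ~ le y s -> basic le A B y)
             \/ (forall y, le y m -> basic le A B y)).
  { destruct (classic (limit_height le m)) as [hlim|hnl].
    - left.
      assert (hb: forall b, In b B -> exists sb, lt le sb m /\ forall y, le y m -> le y b -> le y sb).
      { intros b hbB. pose proof (hB b hbB) as hmb. apply NNPP; intro hno.
        assert (hall: forall s, lt le s m -> le s b).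
        { intros s hs. apply NNPP; intro hsb. apply hno. exists s; split; auto.
          intros y hym hyb. destruct (tree_comp _ _ H y s m hym (proj1 hs)) as [h|h]; auto.
          exfalso; apply hsb; eapply tree_trans; eauto. }
        assert (hbm: ~ lt le b m). { intro h. apply hno. exists b; split; auto. }
        destruct (tree_wo _ _ H b (fun z => ~ lt le z m)) as (b' & hb'1 & hb'b & hb'min).
        { exists b; split; auto; apply (tree_refl _ _ H). }
        assert (m = b').
        { apply (tree_haus _ _ H); auto. intros s; split.
          - intros hs. pose proof (hall s hs) as hsb. destruct (tree_comp _ _ H s b' b hsb hb'b) as [h|h].
            + split; auto. intro e; subst. contradiction.
            + exfalso. apply hb'1. eapply lt_trans_le; eauto.
          - intros [hsb' hne]. apply NNPP; intro hsm.
            pose proof (hb'min s hsm (tree_trans _ _ H _ _ _ hsb' hb'b)). apply hne. apply (tree_antisym _ _ H); auto. }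
        subst. apply hmb; auto. }
      assert (hcomb: forall B', (forall b, In b B' -> In b B) -> exists s, lt le s m /\
                forall b, In b B' -> forall y, le y m -> le y b -> le y s).
      { induction B' as [|b B' IH]; intros hinc.
        - destruct hlim as [[s hs] _]. exists s; split; auto. intros b [].
        - destruct IH as (s1&hs1&h1). { intros; apply hinc; right; auto. }
          destruct (hb b (hinc b (or_introl eq_refl))) as (s2&hs2&h2).
          destruct (tree_comp _ _ H s1 s2 m (proj1 hs1) (proj1 hs2)) as [h|h].
          + exists s2; split; auto. intros b0 hb0 y hy hyb; simpl in hb0; destruct hb0 as [e|hb0]; [ subst b0; eauto | apply (tree_trans _ _ H _ s1 _); [eapply h1; eauto | auto]].
          + exists s1; split; auto. intros b0 hb0 y hy hyb; simpl in hb0; destruct hb0 as [e|hb0]; [ subst b0; apply (tree_trans _ _ H _ s2 _); auto | eapply h1; eauto]. }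
      destruct (hcomb B (fun b h => h)) as (s&hs&hsB). exists s; split; auto. intros y hym hys. split.
      + intros a ha; eapply tree_trans; eauto.
      + intros b hbB hyb. apply hys. eapply hsB; eauto.
    - unfold limit_height in hnl. apply not_and_or in hnl. destruct hnl as [hn|hn].
      + right. intros y hym. assert (y = m).
        { apply NNPP; intro hne. apply hn. exists y; split; auto. } subst. split; auto.
      + left. apply not_all_ex_not in hn as [s hs]. apply imply_to_and in hs as [hsm hs].
        exists s; split; auto.
        intros y hym hys. assert (y = m).
        { apply NNPP; intro hne. destruct (tree_comp _ _ H y s m hym (proj1 hsm)) as [h|h]; [contradiction|].
          apply hs. exists y. split; split; auto. intro e; subst; apply hys; apply (tree_refl _ _ H). }
        subst; split; auto. }
  destruct claim as [(s&[hsm hsne]&hs)|hall].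
  - apply Pm.
    assert (hP: ~ P s).
    { intro Ps. apply hsne. apply (tree_antisym _ _ H). exact hsm. apply hmin; auto. eapply tree_trans; eauto. }
    unfold P in hP; apply NNPP in hP. destruct hP as [l hl]. exists (i0::l). intros y hy.
    destruct (classic (le y s)) as [h|h].
    + destruct (hl y h) as [i [h1 h2]]. exists i; split; [right|]; auto.
    + exists i0; split; [left; auto|]. apply hsub, hs; auto.
  - apply Pm. exists (i0::nil). intros y hy; exists i0; split; [left;auto|apply hsub, hall; auto].
Qed.

Lemma open_ext T (le:T->T->Prop) (U V : T -> Prop) : (forall x, U x <-> V x) -> is_open le U -> is_open le V.
Proof.
  intros he hU x hx. apply he in hx. destruct (hU x hx) as (A&B&hb&h). exists A, B; split; auto.
  intros y hy; apply he; auto.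
Qed.

Lemma closed_ge T (le:T->T->Prop) f eps : continuous_tree le f -> is_open le (fun x => ~ eps <= Rabs (f x)).
Proof.
  intros hf. eapply open_ext; [|apply (open_lt _ _ f eps hf)]. intros x; simpl; split; intros; lra.
Qed.

Lemma C0_ind T (le:T->T->Prop) (H:is_tree le) t : C0 le (indicator_le le t).
Proof.
  split. apply cont_ind; auto.
  intros eps he. apply closed_sub_compact with (K1 := fun x => le x t).
  apply compact_down; auto.
  intros x hx. unfold indicator_le in hx. destruct (excluded_middle_informative (le x t)); auto.
  rewrite Rabs_R0 in hx; lra.
  apply closed_ge, cont_ind; auto.
Qed.

Lemma C0_lin T (le:T->T->Prop) f g al be : C0 le f -> C0 le g -> C0 le (fun y => al * f y + be * g y).
Proof.
  intros [cf hf] [cg hg]. split. apply cont_lin; auto.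
  intros eps he.
  set (d := eps / (2 * (Rabs al + Rabs be + 1))).
  assert (hd : 0 < d). { unfold d. apply Rdiv_lt_0_compat; auto. pose proof (Rabs_pos al); pose proof (Rabs_pos be); lra. }
  apply closed_sub_compact with (K1 := fun x => d <= Rabs (f x) \/ d <= Rabs (g x)).
  - apply compact_union; auto.
  - intros x hx. apply NNPP; intro hn. apply not_or_and in hn as [h1 h2].
    apply Rnot_le_lt in h1; apply Rnot_le_lt in h2.
    assert (Rabs (al * f x + be * g x) < eps); [|lra].
    eapply Rle_lt_trans. apply Rabs_triang. rewrite !Rabs_mult.
    assert (Rabs al * Rabs (f x) <= Rabs al * d) by (apply Rmult_le_compat_l; [apply Rabs_pos|lra]).
    assert (Rabs be * Rabs (g x) <= Rabs be * d) by (apply Rmult_le_compat_l; [apply Rabs_pos|lra]).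
    assert (d * (2 * (Rabs al + Rabs be + 1)) = eps) by (unfold d; field; pose proof (Rabs_pos al); pose proof (Rabs_pos be); lra).
    pose proof (Rabs_pos al); pose proof (Rabs_pos be). nra.
  - apply closed_ge, cont_lin; auto.
Qed.

Lemma C0_approx T (le:T->T->Prop) f :
  (forall d, 0 < d -> exists g, C0 le g /\ forall y, Rabs (f y - g y) <= d) -> C0 le f.
Proof.
  intros happ.
  assert (cf : continuous_tree le f).
  { intros x eps he. destruct (happ (eps/4)) as (g&[cg _]&hg). lra.
    destruct (cg x (eps/4)) as (A&B&hb&h). lra. exists A, B; split; auto.
    intros y hy. specialize (h y hy). pose proof (hg x); pose proof (hg y).
    replace (f y - f x) with ((f y - g y) + (g y - g x) + (g x - f x)) by ring.
    eapply Rle_lt_trans. apply Rabs_triang. eapply Rle_lt_trans. apply Rplus_le_compat_r, Rabs_triang.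
    rewrite (Rabs_minus_sym (g x)). lra. }
  split; auto. intros eps he. destruct (happ (eps/2)) as (g&[cg kg]&hg). lra.
  apply closed_sub_compact with (K1 := fun x => eps/2 <= Rabs (g x)).
  - apply kg; lra.
  - intros x hx. pose proof (hg x). pose proof (Rabs_triang_inv (f x) (g x)). lra.
  - apply closed_ge; auto.
Qed.

Fixpoint lmax (l : list nat) : R := match l with nil => 1 | n :: r => Rmax (INR n) (lmax r) end.
Lemma lmax_ge l n : In n l -> INR n <= lmax l.
Proof. induction l; simpl; intros h. destruct h. destruct h as [<-|h]. apply Rmax_l.
  eapply Rle_trans; [apply IHl; auto|apply Rmax_r]. Qed.
Lemma lmax_1 l : 1 <= lmax l.
Proof. induction l; simpl. lra. eapply Rle_trans; [apply IHl|apply Rmax_r]. Qed.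

Lemma C0_bounded T (le:T->T->Prop) g : C0 le g -> exists B, forall y, Rabs (g y) <= B.
Proof.
  intros [cg kg]. destruct (kg 1 Rlt_0_1 nat (fun n y => Rabs (g y) < INR n)) as [l hl].
  - intros n. apply open_lt; auto.
  - intros x _. destruct (archimed (Rabs (g x))) as [h _].
    assert (0 <= IZR (up (Rabs (g x)))) by (pose proof (Rabs_pos (g x)); lra).
    exists (Z.to_nat (up (Rabs (g x)))). rewrite INR_IZR_INZ, Z2Nat.id; auto. apply le_IZR; auto.
  - exists (lmax l). intros y. destruct (Rle_dec 1 (Rabs (g y))) as [h|h].
    + destruct (hl y h) as [i [hi hu]]. pose proof (lmax_ge l i hi). lra.
    + pose proof (lmax_1 l). lra.
Qed.

Lemma sup_ge T (le:T->T->Prop) g : C0 le g -> forall y, Rabs (g y) <= sup_norm g.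
Proof.
  intros hg y. destruct (C0_bounded _ _ g hg) as [B hB]. unfold sup_norm.
  destruct (Lub_Rbar_correct (fun r => exists x, r = Rabs (g x))) as [h1 h2].
  assert (a1 : Rbar_le (Rabs (g y)) (Lub_Rbar (fun r => exists x, r = Rabs (g x)))) by (apply h1; eauto).
  assert (a2 : Rbar_le (Lub_Rbar (fun r => exists x, r = Rabs (g x))) B).
  { apply h2. intros r [x ->]. simpl. auto. }
  destruct (Lub_Rbar (fun r => exists x, r = Rabs (g x))); simpl in *; auto; contradiction.
Qed.

Lemma sup_le T (g : T -> R) B : 0 <= B -> (forall y, Rabs (g y) <= B) -> sup_norm g <= B.
Proof.
  intros hB h. unfold sup_norm.
  destruct (Lub_Rbar_correct (fun r => exists x, r = Rabs (g x))) as [h1 h2].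
  assert (a2 : Rbar_le (Lub_Rbar (fun r => exists x, r = Rabs (g x))) B).
  { apply h2. intros r [x ->]. simpl. auto. }
  destruct (Lub_Rbar (fun r => exists x, r = Rabs (g x))); simpl in *; auto; contradiction.
Qed.

Lemma half_pow_small eps : 0 < eps -> exists n, (/2)^n < eps.
Proof.
  intros he. destruct (pow_lt_1_zero (/2)) with (y := eps) as [n hn]; auto.
  rewrite Rabs_pos_eq; lra. exists n. specialize (hn n (Nat.le_refl n)).
  rewrite Rabs_pos_eq in hn; auto. apply pow_le; lra.
Qed.

Lemma half_pow_pos n : 0 < (/2)^n.
Proof. apply pow_lt; lra. Qed.

Lemma small_le r K : (forall n, r <= K * (/2)^n) -> r <= 0.
Proof.
  intros h. apply Rnot_lt_le; intro hr.
  destruct (Rle_dec K 0) as [hK|hK].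
  - specialize (h O). simpl in h. lra.
  - destruct (half_pow_small (r / K)) as [n hn]. apply Rdiv_lt_0_compat; lra.
    specialize (h n). apply Rmult_lt_compat_l with (r := K) in hn; [|lra].
    replace (K * (r / K)) with r in hn by (field; lra). lra.
Qed.

Lemma C0_ext T (le:T->T->Prop) f g : (forall y, f y = g y) -> C0 le f -> C0 le g.
Proof. intros h hf. replace g with f; auto. apply functional_extensionality; auto. Qed.

Lemma ind01 T (le:T->T->Prop) q y : indicator_le le q y = 0 \/ indicator_le le q y = 1.
Proof. unfold indicator_le; destruct (excluded_middle_informative (le y q)); auto. Qed.

Lemma ind_same T (le:T->T->Prop) (H:is_tree le) q r y : le q r -> ~ lt le q y ->
  indicator_le le r y = indicator_le le q y.
Proof.
  intros hqr hn. unfold indicator_le.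
  destruct (excluded_middle_informative (le y q)) as [h1|h1];
  destruct (excluded_middle_informative (le y r)) as [h2|h2]; auto.
  - exfalso; apply h2; eapply tree_trans; eauto.
  - exfalso. destruct (tree_comp _ _ H y q r h2 hqr) as [h|h]; auto. apply hn; split; auto.
    intros ->; auto.
Qed.

Fixpoint Avg {T} (u v : T -> T) (g : T -> T -> R) (n : nat) (p : T) : T -> R :=
  match n with O => g p | S n => fun y => /2 * (Avg u v g n (u p) y + Avg u v g n (v p) y) end.

Definition Hsplit {T} (le : T -> T -> Prop) (G : T -> Prop) (u v : T -> T) :=
  forall q, G q -> G (u q) /\ G (v q) /\ le q (u q) /\ le q (v q) /\ ~ le (u q) (v q) /\ ~ le (v q) (u q).

Lemma Avg_disj T (le:T->T->Prop) (H:is_tree le) G u v (hs : Hsplit le G u v) g B : 0 <= B ->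
  (forall q y, G q -> Rabs (g q y) <= B) -> (forall q y, G q -> g q y <> 0 -> lt le q y) ->
  forall n p y, G p -> Rabs (Avg u v g n p y) <= B * (/2)^n /\ (Avg u v g n p y <> 0 -> lt le p y).
Proof.
  intros hB hb hsu n. induction n as [|n IH]; intros p y hp.
  - simpl. rewrite Rmult_1_r. auto.
  - destruct (hs p hp) as (g1&g2&l1&l2&n1&n2). simpl.
    destruct (IH (u p) y g1) as [a1 a2]. destruct (IH (v p) y g2) as [b1 b2].
    set (a := Avg u v g n (u p) y) in *. set (b := Avg u v g n (v p) y) in *.
    pose proof (half_pow_pos n).
    destruct (Req_dec a 0) as [ha|ha].
    { destruct (Req_dec b 0) as [hb'|hb'].
      + rewrite ha, hb'. split. rewrite Rplus_0_r, Rmult_0_r, Rabs_R0. apply Rmult_le_pos; auto. apply Rmult_le_pos; lra.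
        intros h; exfalso; apply h; ring.
      + rewrite ha, Rplus_0_l. split. rewrite Rabs_mult, (Rabs_pos_eq (/2)) by lra. simpl. nra.
        intros _. apply (lt_trans_le _ _ H p (v p) y l2). auto. }
    destruct (Req_dec b 0) as [hb'|hb'].
    + rewrite hb', Rplus_0_r. split. rewrite Rabs_mult, (Rabs_pos_eq (/2)) by lra. simpl. nra.
      intros _. apply (lt_trans_le _ _ H p (u p) y l1). auto.
    + exfalso. destruct (a2 ha) as [c1 _]. destruct (b2 hb') as [c2 _].
      destruct (tree_comp _ _ H _ _ _ c1 c2); auto.
Qed.

Lemma Avg_tele {T} (u v : T -> T) g n p y :
  Avg u v g (S n) p y = Avg u v (fun q y => /2 * (g (u q) y + g (v q) y)) n p y.
Proof.
  revert p; induction n; intros p. reflexivity.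
  change (Avg u v g (S (S n)) p y) with (/2 * (Avg u v g (S n) (u p) y + Avg u v g (S n) (v p) y)).
  rewrite !IHn. reflexivity.
Qed.

Lemma Avg_add {T} (u v : T -> T) g1 g2 n p y :
  Avg u v (fun q y => g1 q y + g2 q y) n p y = Avg u v g1 n p y + Avg u v g2 n p y.
Proof. revert p; induction n; intros p; simpl; auto. rewrite !IHn. ring. Qed.

Lemma Avg_sub {T} (u v : T -> T) g1 g2 n p y :
  Avg u v (fun q y => g1 q y - g2 q y) n p y = Avg u v g1 n p y - Avg u v g2 n p y.
Proof. revert p; induction n; intros p; simpl; auto. rewrite !IHn. ring. Qed.

Lemma Avg_C0 T (le:T->T->Prop) G u v (hs : Hsplit le G u v) g :
  (forall q, G q -> C0 le (g q)) -> forall n p, G p -> C0 le (Avg u v g n p).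
Proof.
  intros hg n; induction n; intros p hp; simpl; auto.
  destruct (hs p hp) as (g1&g2&_).
  eapply C0_ext; [|apply (C0_lin _ _ _ _ (/2) (/2) (IHn _ g1) (IHn _ g2))]. intros y; simpl; ring.
Qed.

Lemma Avg_N T (le:T->T->Prop) N (HN : equivalent_norm le N) G u v (hs : Hsplit le G u v) g C :
  (forall q, G q -> C0 le (g q) /\ N (g q) <= C) -> forall n p, G p -> N (Avg u v g n p) <= C.
Proof.
  intros hg n; induction n; intros p hp; simpl. apply hg; auto.
  destruct HN as (Ntri&Nhom&_).
  destruct (hs p hp) as (g1&g2&_).
  assert (c1 := Avg_C0 _ _ _ _ _ hs g (fun q h => proj1 (hg q h)) n _ g1).
  assert (c2 := Avg_C0 _ _ _ _ _ hs g (fun q h => proj1 (hg q h)) n _ g2).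
  assert (cs : C0 le (fun y => Avg u v g n (u p) y + Avg u v g n (v p) y)).
  { eapply C0_ext; [|apply (C0_lin _ _ _ _ 1 1 c1 c2)]. intros y; simpl; ring. }
  pose proof (Nhom (/2) _ cs) as E. cbv beta in E. rewrite E.
  pose proof (Ntri _ _ c1 c2). pose proof (IHn _ g1). pose proof (IHn _ g2).
  rewrite Rabs_pos_eq by lra. lra.
Qed.


Lemma H_step T (le:T->T->Prop) (H:is_tree le) G u v (hs : Hsplit le G u v) n p y : G p ->
  Rabs (Avg u v (indicator_le le) (S n) p y - Avg u v (indicator_le le) n p y) <= (/2)^n /\
  (Avg u v (indicator_le le) (S n) p y - Avg u v (indicator_le le) n p y <> 0 -> lt le p y).
Proof.
  intros hp. rewrite Avg_tele, <- Avg_sub. rewrite <- (Rmult_1_l ((/2)^n)).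
  apply (Avg_disj _ _ H G u v hs); auto; try lra.
  - intros q z _. apply Rabs_le.
    destruct (ind01 _ le (u q) z) as [e1|e1]; destruct (ind01 _ le (v q) z) as [e2|e2];
    destruct (ind01 _ le q z) as [e3|e3]; rewrite e1, e2, e3; lra.
  - intros q z hq hn. apply NNPP; intro hl. apply hn. cbv beta.
    destruct (hs q hq) as (_&_&l1&l2&_).
    rewrite (ind_same _ _ H q (u q) z l1 hl), (ind_same _ _ H q (v q) z l2 hl). field.
Qed.

Lemma H_cauchy T (le:T->T->Prop) (H:is_tree le) G u v (hs : Hsplit le G u v) p y : G p -> forall k n,
  Rabs (Avg u v (indicator_le le) (n + k) p y - Avg u v (indicator_le le) n p y) <= 2*(/2)^n - 2*(/2)^n*(/2)^k.
Proof.
  intros hp k; induction k; intros n.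
  - rewrite Nat.add_0_r, Rminus_diag, Rabs_R0. simpl. lra.
  - rewrite Nat.add_succ_r.
    destruct (H_step _ _ H G u v hs (n + k) p y hp) as [h1 _].
    specialize (IHk n). rewrite pow_add in h1.
    replace (Avg u v (indicator_le le) (S (n + k)) p y - Avg u v (indicator_le le) n p y) with
      ((Avg u v (indicator_le le) (S (n + k)) p y - Avg u v (indicator_le le) (n+k) p y) +
       (Avg u v (indicator_le le) (n + k) p y - Avg u v (indicator_le le) n p y)) by ring.
    eapply Rle_trans. apply Rabs_triang. change ((/2)^(S k)) with (/2 * (/2)^k). set (a := (/2)^n) in *. set (b := (/2)^k) in *. assert (2*a*(/2*b) = a*b) by field. lra.
Qed.

Lemma H_cauchy' T (le:T->T->Prop) (H:is_tree le) G u v (hs : Hsplit le G u v) p y : G p -> forall n m, (n <= m)%nat ->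
  Rabs (Avg u v (indicator_le le) m p y - Avg u v (indicator_le le) n p y) <= 2*(/2)^n.
Proof.
  intros hp n m hnm. replace m with (n + (m - n))%nat by lia.
  pose proof (H_cauchy _ _ H G u v hs p y hp (m - n) n).
  pose proof (half_pow_pos n). pose proof (half_pow_pos (m - n)). nra.
Qed.

Lemma H_const T (le:T->T->Prop) (H:is_tree le) G u v (hs : Hsplit le G u v) p y : G p -> ~ lt le p y ->
  forall n, Avg u v (indicator_le le) n p y = indicator_le le p y.
Proof.
  intros hp hl n; induction n. reflexivity.
  destruct (H_step _ _ H G u v hs n p y hp) as [_ h2].
  destruct (Req_dec (Avg u v (indicator_le le) (S n) p y - Avg u v (indicator_le le) n p y) 0) as [e|e].
  lra. destruct (hl (h2 e)).
Qed.

Definition hL {T} (le:T->T->Prop) (u v : T -> T) (p : T) (y : T) : R :=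
  Lim_seq (fun n => Avg u v (indicator_le le) n p y).

Lemma hL_lim T (le:T->T->Prop) (H:is_tree le) G u v (hs : Hsplit le G u v) p y : G p ->
  is_lim_seq (fun n => Avg u v (indicator_le le) n p y) (hL le u v p y).
Proof.
  intros hp. apply Lim_seq_correct'. apply ex_lim_seq_cauchy_corr. intros eps.
  destruct (half_pow_small (eps/4)) as [N hN]. destruct eps; simpl; lra.
  exists N. intros n m hn hm.
  pose proof (H_cauchy' _ _ H G u v hs p y hp N n hn).
  pose proof (H_cauchy' _ _ H G u v hs p y hp N m hm).
  replace (Avg u v (indicator_le le) n p y - Avg u v (indicator_le le) m p y) with
    ((Avg u v (indicator_le le) n p y - Avg u v (indicator_le le) N p y) -
     (Avg u v (indicator_le le) m p y - Avg u v (indicator_le le) N p y)) by ring.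
  eapply Rle_lt_trans. apply Rabs_triang. rewrite Rabs_Ropp. lra.
Qed.

Lemma hL_bound T (le:T->T->Prop) (H:is_tree le) G u v (hs : Hsplit le G u v) p y : G p -> forall n,
  Rabs (hL le u v p y - Avg u v (indicator_le le) n p y) <= 2*(/2)^n.
Proof.
  intros hp n.
  pose proof (is_lim_seq_abs _ _ (is_lim_seq_minus' _ _ _ _ (hL_lim _ _ H G u v hs p y hp)
                (is_lim_seq_const (Avg u v (indicator_le le) n p y)))) as l.
  assert (hle := is_lim_seq_le_loc _ _ _ _ ltac:(exists n; intros m hm; exact (H_cauchy' _ _ H G u v hs p y hp n m hm)) l (is_lim_seq_const (2*(/2)^n))).
  simpl in hle. exact hle.
Qed.

Lemma hL_C0 T (le:T->T->Prop) (H:is_tree le) G u v (hs : Hsplit le G u v) p : G p -> C0 le (hL le u v p).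
Proof.
  intros hp. apply C0_approx. intros d hd. destruct (half_pow_small (d/2)) as [n hn]. lra.
  exists (Avg u v (indicator_le le) n p). split.
  apply (Avg_C0 _ _ G u v hs); auto. intros q _; apply C0_ind; auto.
  intros y. pose proof (hL_bound _ _ H G u v hs p y hp n). lra.
Qed.

Lemma hL_supp T (le:T->T->Prop) (H:is_tree le) G u v (hs : Hsplit le G u v) p y : G p -> ~ lt le p y ->
  hL le u v p y = indicator_le le p y.
Proof.
  intros hp hl. set (x := hL le u v p y - indicator_le le p y).
  assert (Rabs x <= 0).
  { apply (small_le _ 2). intros n. unfold x. rewrite <- (H_const _ _ H G u v hs p y hp hl n).
    apply (hL_bound _ _ H G u v hs); auto. }
  pose proof (Rle_abs x). pose proof (Rle_abs (-x)). rewrite Rabs_Ropp in *. unfold x in *. lra.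
Qed.

Lemma mu_facts T (le:T->T->Prop) (H:is_tree le) N (HN : equivalent_norm le N) t :
  (forall f', C0 le f' -> (forall s, f' s <> 0 -> lt le t s) -> mu le N t <= N (fun x => indicator_le le t x + f' x)) /\
  (forall eps, 0 < eps -> exists f', C0 le f' /\ (forall s, f' s <> 0 -> lt le t s) /\
      N (fun x => indicator_le le t x + f' x) < mu le N t + eps).
Proof.
  destruct HN as (Ntri&Nhom&Nnn&_).
  unfold mu.
  set (S := fun r => exists f', C0 le f' /\ (forall s, f' s <> 0 -> lt le t s) /\ r = N (fun x => indicator_le le t x + f' x)).
  assert (hsum : forall f', C0 le f' -> C0 le (fun x => indicator_le le t x + f' x)).
  { intros f' hf. eapply C0_ext; [|apply (C0_lin _ _ _ _ 1 1 (C0_ind _ _ H t) hf)]. intros; simpl; ring. }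
  assert (h0 : C0 le (fun _ : T => 0)).
  { eapply C0_ext; [|apply (C0_lin _ _ _ _ 0 0 (C0_ind _ _ H t) (C0_ind _ _ H t))]. intros; simpl; ring. }
  assert (hS0 : S (N (fun x => indicator_le le t x + 0))).
  { exists (fun _ => 0). split; auto. split; auto. intros s h; exfalso; apply h; auto. }
  destruct (Glb_Rbar_correct S) as [h1 h2].
  assert (hlb0 : is_lb_Rbar S 0).
  { intros r (f'&hf&_&->). simpl. apply Nnn. auto. }
  pose proof (h2 _ hlb0) as hg0. pose proof (h1 _ hS0) as hgS.
  destruct (Glb_Rbar S) as [g| |] eqn:E; simpl in hg0, hgS; try contradiction.
  simpl. split.
  - intros f' hf hsu. pose proof (h1 (N (fun x => indicator_le le t x + f' x))) as h.
    apply h. exists f'; auto.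
  - intros eps he. apply NNPP; intro hno.
    assert (hlb : is_lb_Rbar S (g + eps)).
    { intros r (f'&hf&hsu&->). simpl. apply Rnot_lt_le. intro hlt. apply hno. exists f'; auto. }
    pose proof (h2 _ hlb) as hh. simpl in hh. lra.
Qed.

Lemma attain T (le:T->T->Prop) (H:is_tree le) N (HN : equivalent_norm le N) G u v (hs : Hsplit le G u v)
  c (hc : forall q, G q -> mu le N q = c) p : G p -> N (hL le u v p) <= c.
Proof.
  intros hp. pose proof HN as (Ntri&Nhom&Nnn&Ndef&(a&b&ha&hb&Heq)).
  assert (key : forall eps, 0 < eps -> eps <= 1 -> exists M, 0 <= M /\ forall n,
             N (hL le u v p) <= c + eps + b * (2 + M) * (/2)^n).
  { intros eps he he1.
    assert (hF : forall q, exists f', G q -> C0 le f' /\ (forall s, f' s <> 0 -> lt le q s) /\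
               N (fun x => indicator_le le q x + f' x) < c + eps).
    { intros q. destruct (classic (G q)) as [g|g].
      - destruct (proj2 (mu_facts _ _ H N HN q) eps he) as (f'&h1&h2&h3). exists f'. intros _.
        rewrite <- (hc q g). auto.
      - exists (fun _ => 0). intros; contradiction. }
    set (F := fun q => proj1_sig (constructive_indefinite_description _ (hF q))).
    assert (hFp : forall q, G q -> C0 le (F q) /\ (forall s, F q s <> 0 -> lt le q s) /\
               N (fun x => indicator_le le q x + F q x) < c + eps).
    { intros q g. unfold F. destruct (constructive_indefinite_description _ (hF q)) as [f' hf']. simpl. auto. }
    set (x := fun q y => indicator_le le q y + F q y).
    assert (hx : forall q, G q -> C0 le (x q) /\ N (x q) <= c + eps).
    { intros q g. destruct (hFp q g) as (h1&_&h3). split; [|unfold x; lra].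
      eapply C0_ext; [|apply (C0_lin _ _ _ _ 1 1 (C0_ind _ _ H q) h1)]. intros; unfold x; simpl; ring. }
    set (M := (c + 1) / a + 1).
    assert (hc1 : 0 < c + 1). { destruct (hFp p hp) as (_&_&h3). assert (hcx : C0 le (fun x0 => indicator_le le p x0 + F p x0)) by exact (proj1 (hx p hp)). pose proof (Nnn _ hcx). lra. }
    assert (hM : 0 <= M). { unfold M. assert (0 <= (c+1)/a) by (apply Rlt_le, Rdiv_lt_0_compat; lra). lra. }
    exists M; split; auto. intros n.
    assert (hFb : forall q y, G q -> Rabs (F q y) <= M).
    { intros q y g. destruct (hx q g) as [h1 h2].
      pose proof (sup_ge _ _ _ h1 y) as s1. destruct (Heq _ h1) as [s2 _].
      assert (sup_norm (x q) <= (c+1)/a).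
      { assert (a * ((c+1)/a) = c+1) by (field; lra). nra. }
      replace (F q y) with (x q y - indicator_le le q y) by (unfold x; ring).
      eapply Rle_trans. apply Rabs_triang. rewrite Rabs_Ropp.
      destruct (ind01 _ le q y) as [e|e]; rewrite e; [rewrite Rabs_R0|rewrite Rabs_R1]; unfold M; lra. }
    assert (hAF : forall y, Rabs (Avg u v F n p y) <= M * (/2)^n).
    { intros y. apply (Avg_disj _ _ H G u v hs F M hM hFb); auto. intros q z g. apply (hFp q g). }
    set (X := Avg u v x n p).
    assert (cX : C0 le X). { apply (Avg_C0 _ _ G u v hs); auto. intros q g; apply hx; auto. }
    assert (nX : N X <= c + eps). { apply (Avg_N _ _ N HN G u v hs); auto. }
    set (D := fun y => hL le u v p y - X y).
    assert (cD : C0 le D).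
    { eapply C0_ext; [|apply (C0_lin _ _ _ _ 1 (-1) (hL_C0 _ _ H G u v hs p hp) cX)]. intros; unfold D; simpl; ring. }
    assert (bD : forall y, Rabs (D y) <= (2 + M) * (/2)^n).
    { intros y. unfold D, X. rewrite (Avg_add u v (indicator_le le) F).
      pose proof (hL_bound _ _ H G u v hs p y hp n). pose proof (hAF y).
      replace (hL le u v p y - (Avg u v (indicator_le le) n p y + Avg u v F n p y)) with
        ((hL le u v p y - Avg u v (indicator_le le) n p y) - Avg u v F n p y) by ring.
      eapply Rle_trans. apply Rabs_triang. rewrite Rabs_Ropp. lra. }
    assert (nD : N D <= b * ((2 + M) * (/2)^n)).
    { destruct (Heq D cD) as [_ h]. eapply Rle_trans; [apply h|]. apply Rmult_le_compat_l; [lra|].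
      apply sup_le; auto. pose proof (half_pow_pos n). nra. }
    assert (E : hL le u v p = fun y => X y + D y).
    { apply functional_extensionality. intros y; unfold D; ring. }
    rewrite E. pose proof (Ntri X D cX cD). lra. }
  apply Rnot_lt_le. intro hlt.
  set (d := N (hL le u v p) - c).
  destruct (key (Rmin (d/2) 1)) as [M [hM hk]].
  apply Rmin_pos; unfold d; lra. apply Rmin_r.
  assert (hh : N (hL le u v p) - c - Rmin (d/2) 1 <= 0).
  { apply (small_le _ (b * (2 + M))). intros n. specialize (hk n). lra. }
  pose proof (Rmin_l (d/2) 1). unfold d in *. lra.
Qed.

Theorem proposition3p4 (T : Type) (le : T -> T -> Prop) (Htree : is_tree le)
  (N : (T -> R) -> R) (HN : equivalent_norm le N) (Hsc : strictly_convex le N) :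
  forall G : T -> Prop, ever_branching le G -> ~ constant_on (mu le N) G.
Proof.
  intros G [[t0 hG0] hbr] [c hc].
  assert (hch : forall t, exists pq : T * T, G t -> G (fst pq) /\ G (snd pq) /\ le t (fst pq) /\ le t (snd pq) /\
                 ~ le (fst pq) (snd pq) /\ ~ le (snd pq) (fst pq)).
  { intros t. destruct (classic (G t)) as [g|g].
    - destruct (hbr t g) as (u&v&h). exists (u, v). simpl. intros _; tauto.
    - exists (t, t). intros; contradiction. }
  set (u := fun t => fst (proj1_sig (constructive_indefinite_description _ (hch t)))).
  set (v := fun t => snd (proj1_sig (constructive_indefinite_description _ (hch t)))).
  assert (hs : Hsplit le G u v).
  { intros q g. unfold u, v. destruct (constructive_indefinite_description _ (hch q)) as [pq h]. simpl. auto. }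
  destruct (hs t0 hG0) as (gu&gv&lu&lv&nuv&nvu).
  set (u0 := u t0) in *. set (v0 := v t0) in *.
  set (hu := hL le u v u0). set (hv := hL le u v v0).
  assert (cu : C0 le hu) by (apply (hL_C0 _ _ Htree G u v hs); auto).
  assert (cv : C0 le hv) by (apply (hL_C0 _ _ Htree G u v hs); auto).
  assert (Nu : N hu <= c) by (apply (attain _ _ Htree N HN G u v hs); auto).
  assert (Nv : N hv <= c) by (apply (attain _ _ Htree N HN G u v hs); auto).
  assert (lb : forall t h, G t -> C0 le h -> (forall y, ~ lt le t y -> h y = indicator_le le t y) -> c <= N h).
  { intros t h g ch hsupp. rewrite <- (hc t g).
    assert (cd : C0 le (fun y => h y - indicator_le le t y)).
    { eapply C0_ext; [|apply (C0_lin _ _ _ _ 1 (-1) ch (C0_ind _ _ Htree t))]. intros; simpl; ring. }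
    pose proof (proj1 (mu_facts _ _ Htree N HN t) _ cd) as hm. cbv beta in hm.
    replace (fun x => indicator_le le t x + (h x - indicator_le le t x)) with h in hm
      by (apply functional_extensionality; intros; ring).
    apply hm. intros s hne. apply NNPP; intro hl. apply hne. rewrite (hsupp s hl). ring. }
  assert (Lu : c <= N hu). { apply (lb u0); auto. intros y hl. apply (hL_supp _ _ Htree G u v hs); auto. }
  assert (Lv : c <= N hv). { apply (lb v0); auto. intros y hl. apply (hL_supp _ _ Htree G u v hs); auto. }
  pose proof HN as (Ntri&Nhom&Nnn&_).
  assert (cs : C0 le (fun y => hu y + hv y)).
  { eapply C0_ext; [|apply (C0_lin _ _ _ _ 1 1 cu cv)]. intros; simpl; ring. }
  assert (cm : C0 le (fun y => /2 * (hu y + hv y))).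
  { eapply C0_ext; [|apply (C0_lin _ _ _ _ (/2) (/2) cu cv)]. intros; simpl; ring. }
  assert (Lm : c <= N (fun y => /2 * (hu y + hv y))).
  { apply (lb t0); auto. intros y hl.
    assert (hlu : ~ lt le u0 y) by (intro h; apply hl; exact (lt_trans_le _ _ Htree t0 u0 y lu h)).
    assert (hlv : ~ lt le v0 y) by (intro h; apply hl; exact (lt_trans_le _ _ Htree t0 v0 y lv h)).
    unfold hu, hv. rewrite (hL_supp _ _ Htree G u v hs u0 y gu hlu), (hL_supp _ _ Htree G u v hs v0 y gv hlv).
    rewrite (ind_same _ _ Htree t0 u0 y lu hl), (ind_same _ _ Htree t0 v0 y lv hl). field. }
  pose proof (Nhom (/2) _ cs) as E. cbv beta in E. rewrite E in Lm. rewrite Rabs_pos_eq in Lm by lra.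
  pose proof (Ntri _ _ cu cv).
  assert (eq := Hsc hu hv cu cv ltac:(lra) ltac:(lra) u0).
  unfold hu, hv in eq.
  assert (nl : ~ lt le u0 u0) by (intros [_ h]; auto).
  assert (nl' : ~ lt le v0 u0) by (intros [h _]; auto).
  rewrite (hL_supp _ _ Htree G u v hs u0 u0 gu nl), (hL_supp _ _ Htree G u v hs v0 u0 gv nl') in eq.
  unfold indicator_le in eq.
  destruct (excluded_middle_informative (le u0 u0)) as [h1|h1];
  destruct (excluded_middle_informative (le u0 v0)) as [h2|h2]; try contradiction; try lra.
  apply h1, (tree_refl _ _ Htree).
Qed.
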